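(* Assume Assumption (S) of the context. Let $u_h(\cdot,t)\in\mathbb V^k$ and let numerical flux values $\hat f_{i,j}$ ($j=0,\dots,k+1$, for every cell $i$) be given, with $\hat f_{i,0}=\hat f_{i-\frac12}$ and $\hat f_{i,k+1}=\hat f_{i+\frac12}$ the interface fluxes. Then the semi-discrete spectral volume relations $$((u_h)_t,\omega^* )=\sum_i\sum_{j=0}^k\omega^*_{i,j}(\hat f_{i,j}-\hat f_{i,j+1})\quad\forall\omega^*\in\mathbb V^{k,*}$$ hold if and only if $$((u_h)_t,\omega)_*=\sum_i\Big(Q_i^k(\hat f\omega_x)+\omega(x_{i-\frac12}^+)\hat f_{i-\frac12}-\omega(x_{i+\frac12}^-)\hat f_{i+\frac12}\Big)\quad\forall\omega\in\mathbb V^k,$$ where $Q_i^k(\hat f\omega_x):=\sum_{j=0}^{k+1}A_{i,j}\hat f_{i,j}\,(\omega|_{I_i})'(x_{i,j})$.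
   Context: Let $\Omega=[a,b]$ be partitioned into finitely many cells $I_i=[x_{i-\frac12},x_{i+\frac12}]$ with sizes $h_i$. $(\cdot,\cdot)$ is the $L^2(\Omega)$ inner product, $(\cdot,\cdot)_{I_i}$ the $L^2(I_i)$ inner product. $\mathbb V^k=\{v\in L^2(\Omega): v|_{I_i}\in\mathbb P^k(I_i)\ \forall i\}$. Each $I_i$ has subdivision points $x_{i-\frac12}=x_{i,0}<x_{i,1}<\dots<x_{i,k}<x_{i,k+1}=x_{i+\frac12}$, control volumes $I_{i,j}=[x_{i,j},x_{i,j+1}]$, $j=0,\dots,k$; $\mathbb V^{k,*}$ is the space of functions constant on each $I_{i,j}$, and $\omega^*_{i,j}$ is the value of $\omega^*$ on $I_{i,j}$. On each $I_i$ a quadrature $Q_i^k(v)=\sum_{j=0}^{k+1}A_{i,j}v(x_{i,j})$ is given with error $R_i^k(v)=\int_{I_i}v\,dx-Q_i^k(v)$, exact on $\mathbb P^{k-1}(I_i)$. $M^*:\mathbb V^k\to\mathbb V^{k,*}$ is defined cellwise: for $v=\omega|_{I_i}$, $(M^*\omega)|_{I_{i,0}}=v(x_{i-\frac12})+A_{i,0}v'(x_{i-\frac12})$ and $(M^*\omega)|_{I_{i,j}}-(M^*\omega)|_{I_{i,j-1}}=A_{i,j}v'(x_{i,j})$, $j=1,\dots,k$ (one-sided values from inside $I_i$). $\omega(x^\pm)$ denote right/left limits. $L_{i,\ell}$ is the shifted Legendre polynomial of degree $\ell$ on $I_i$ with $L_{i,\ell}(x_{i+\frac12})=1$, $(L_{i,\ell},L_{i,m})_{I_i}=\delta_{\ell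 m}h_i/(2\ell+1)$. Assumption (S): $k\ge1$ and for every $i$, (1) $R_i^k(v)=0$ for all $v\in\mathbb P^{2k-1}(I_i)$, and (2) $\frac{h_i}{2k-1}-Q_i^k(L_{i,k+1}L_{i,k-1})>0$. Under (S), $(v,\omega)_*:=(v,M^*\omega)$ is an inner product on $\mathbb V^k$. *)

(* Defs.v *)
From HB Require Import structures.
From mathcomp Require Import all_boot all_order all_algebra.
Set Implicit Arguments. Unset Strict Implicit. Unset Printing Implicit Defensive.
Import Order.TTheory GRing.Theory Num.Theory.
Local Open Scope ring_scope.

Section SV.
Variable R : realFieldType.

Definition prim (p : {poly R}) : {poly R} :=
  \poly_(i < (size p).+1) (if i is j.+1 then p`_j / j.+1%:R else 0).

Definition pint (p : {poly R}) (a b : R) : R := (prim p).[b] - (prim p).[a].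

(* Legendre polynomials on [-1,1]: legpair n = (P_n, P_{n+1}) via Bonnet's recursion *)
Fixpoint legpair (n : nat) : {poly R} * {poly R} :=
  match n with
  | 0 => (1, 'X)
  | m.+1 => let: (p, q) := legpair m in
            (q, (m.+2%:R)^-1 *: ((2 * m + 3)%N%:R *: ('X * q) - m.+1%:R *: p))
  end.
Definition legendre (n : nat) : {poly R} := (legpair n).1.

(* shifted Legendre polynomial of degree n on [a,b], with value 1 at b *)
Definition shifted_legendre (a b : R) (n : nat) : {poly R} :=
  legendre n \Po ((2 / (b - a)) *: 'X - ((a + b) / (b - a))%:P).

(* Cells i : 'I_N; subdivision points x i j (j = 0..k+1), x i 0 = x_{i-1/2},
   x i k.+1 = x_{i+1/2}; quadrature weights A i j (j = 0..k+1).
   An element of V^k is a family w : 'I_N -> {poly R} with size (w i) <= k+1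
   (w i = the restriction to I_i). An element of V^{k,*} is a family
   ws : 'I_N -> nat -> R, ws i j = value on I_{i,j} (j = 0..k). *)

Definition quad (k N : nat) (x A : 'I_N -> nat -> R) (i : 'I_N) (p : {poly R}) : R :=
  \sum_(j < k.+2) A i j * p.[x i j].

Definition l2_star (k N : nat) (x : 'I_N -> nat -> R) (v : 'I_N -> {poly R})
  (ws : 'I_N -> nat -> R) : R :=
  \sum_(i < N) \sum_(j < k.+1) ws i j * pint (v i) (x i j) (x i j.+1).

Definition Mstar (N : nat) (x A : 'I_N -> nat -> R) (w : 'I_N -> {poly R})
  : 'I_N -> nat -> R :=
  fun i j => (w i).[x i 0] + \sum_(m < j.+1) A i m * (w i)^`().[x i m].

Definition ip_star (k N : nat) (x A : 'I_N -> nat -> R) (v w : 'I_N -> {poly R}) : R :=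
  l2_star k x v (Mstar x A w).

Definition quad_flux (k N : nat) (x A fhat : 'I_N -> nat -> R) (w : 'I_N -> {poly R})
  (i : 'I_N) : R :=
  \sum_(j < k.+2) A i j * fhat i j * (w i)^`().[x i j].

End SV.

(* Main.v *)
Require Import Defs.
From HB Require Import structures.
From mathcomp Require Import all_boot all_order all_algebra.
From mathcomp Require Import ring lra zify.
Set Implicit Arguments. Unset Strict Implicit. Unset Printing Implicit Defensive.
Import Order.TTheory GRing.Theory Num.Theory.
Local Open Scope ring_scope.

Section Base.
Variable R : realFieldType.
Implicit Types p q F : {poly R}.

Lemma deriv_eq0_const p : p^`() = 0 -> p = (p`_0)%:P.
Proof.
move=> h; apply/polyP => i; rewrite coefC; case: i => [|i] //=.
have := congr1 (fun q => q`_i) h; rewrite coef_deriv coef0 => /eqP.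
by rewrite -mulr_natr mulf_eq0 pnatr_eq0 orbF => /eqP.
Qed.

Lemma prim_deriv p : (prim p)^`() = p.
Proof.
apply/polyP => i; rewrite coef_deriv /prim coef_poly; case: ifP => h /=.
  by set m := i.+1%:R; rewrite -mulr_natr divfK // /m pnatr_eq0.
rewrite mul0rn nth_default //; move: h; rewrite ltnS; case: leqP => //.
Qed.

Lemma size_prim p : (size (prim p) <= (size p).+1)%N.
Proof. exact: size_poly. Qed.

Lemma ftc p F a b : F^`() = p -> pint p a b = F.[b] - F.[a].
Proof.
move=> h.
have : (prim p - F)^`() = 0 by rewrite derivB prim_deriv h subrr.
move/deriv_eq0_const => e; rewrite /pint.
have -> : prim p = F + ((prim p - F)`_0)%:P by rewrite -e addrC subrK.
rewrite !hornerD !hornerC; ring.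
Qed.

Lemma pintD p q a b : pint (p + q) a b = pint p a b + pint q a b.
Proof.
rewrite (@ftc _ (prim p + prim q)); last by rewrite derivD !prim_deriv.
rewrite /pint !hornerD; ring.
Qed.

Lemma pintZ c p a b : pint (c *: p) a b = c * pint p a b.
Proof.
rewrite (@ftc _ (c *: prim p)); last by rewrite derivZ !prim_deriv.
rewrite /pint !hornerZ; ring.
Qed.

Lemma pintN p a b : pint (- p) a b = - pint p a b.
Proof. by rewrite -scaleN1r pintZ mulN1r. Qed.

Lemma pintB p q a b : pint (p - q) a b = pint p a b - pint q a b.
Proof. by rewrite pintD pintN. Qed.

Lemma pint0 (a b : R) : pint 0 a b = 0.
Proof. by rewrite -(scale0r (0 : {poly R})) pintZ mul0r. Qed.

Lemma pint_deriv F a b : pint F^`() a b = F.[b] - F.[a].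
Proof. exact: ftc. Qed.

Lemma pint_parts p q (a b : R) :
  pint (p^`() * q) a b = (p * q).[b] - (p * q).[a] - pint (p * q^`()) a b :> R.
Proof.
have := pint_deriv (p * q) a b; rewrite derivM pintD => <-; ring.
Qed.

Lemma pint_comp p s t a b : s != 0 ->
  pint (p \Po (s *: 'X + t%:P)) a b
  = s^-1 * pint p (s * a + t) (s * b + t).
Proof.
move=> s0.
rewrite (@ftc _ (s^-1 *: (prim p \Po (s *: 'X + t%:P)))); last first.
  rewrite derivZ deriv_comp prim_deriv derivD derivC addr0 derivZ derivX.
  by rewrite mulrC -scalerAl mul1r scalerA mulVf // scale1r.
rewrite /pint !hornerZ !horner_comp !hornerD !hornerZ !hornerX !hornerC; ring.
Qed.

End Base.

Section Leg.
Variable R : realFieldType.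
Local Notation P n := (legendre R n).

Lemma legpairS m : legpair R m.+1 =
  ((legpair R m).2, (m.+2%:R)^-1 *: ((2 * m + 3)%N%:R *: ('X * (legpair R m).2)
      - m.+1%:R *: (legpair R m).1)).
Proof. by rewrite /=; case: (legpair R m). Qed.

Lemma P0 : P 0 = 1. Proof. by []. Qed.
Lemma P1 : P 1 = 'X. Proof. by []. Qed.

Lemma Prec n : P n.+2 *+ n.+2 = 'X * P n.+1 *+ (2 * n + 3) - P n *+ n.+1.
Proof.
rewrite /legendre [legpair R n.+2]legpairS [legpair R n.+1]legpairS /=.
rewrite -scaler_nat scalerA mulfV ?pnatr_eq0 // scale1r !scaler_nat.
by [].
Qed.

Definition npoly (n : nat) : {poly R} := n%:R.

Lemma nK (n : nat) (p : {poly R}) : p *+ n = npoly n * p.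
Proof. by rewrite /npoly mulr_natl. Qed.

Lemma npoly_neq0 n : npoly n.+1 != 0.
Proof. by rewrite /npoly -polyC_natr polyC_eq0 pnatr_eq0. Qed.

Lemma npolyD m n : npoly (m + n) = npoly m + npoly n.
Proof. by rewrite /npoly natrD. Qed.

Lemma deriv_npoly n p : (npoly n * p)^`() = npoly n * p^`().
Proof. by rewrite -!nK derivMn. Qed.

Lemma legid n :
  [/\ (P n.+1)^`() = 'X * (P n)^`() + npoly n.+1 * P n,
      'X * (P n.+1)^`() - (P n)^`() = npoly n.+1 * P n.+1 &
      ('X^2 - 1) * (P n.+1)^`() = npoly n.+1 * ('X * P n.+1 - P n)].
Proof.
elim: n => [|n [hA hB hD]].
  rewrite P1 P0 derivX derivC /npoly; split; ring.
have hr : npoly n.+2 * P n.+2 = npoly (2 * n + 3) * ('X * P n.+1) - npoly n.+1 * P n.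
  by rewrite -!nK Prec.
have hr' : npoly n.+2 * (P n.+2)^`() = npoly (2 * n + 3) * ((P n.+1) + 'X * (P n.+1)^`())
   - npoly n.+1 * (P n)^`().
  by rewrite -deriv_npoly hr derivB !deriv_npoly derivM derivX mul1r.
have hA' : (P n.+2)^`() = 'X * (P n.+1)^`() + npoly n.+2 * P n.+1.
  apply: (mulfI (npoly_neq0 n.+1)); rewrite hr'.
  have e : (P n)^`() = 'X * (P n.+1)^`() - npoly n.+1 * P n.+1 by rewrite -hB; ring.
  rewrite e /npoly; ring.
split => //.
  rewrite hA' hr.
  have -> : 'X * ('X * (P n.+1)^`() + npoly n.+2 * P n.+1) - (P n.+1)^`()
    = ('X^2 - 1) * (P n.+1)^`() + npoly n.+2 * ('X * P n.+1) by ring.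
  rewrite hD /npoly; ring.
have -> : npoly n.+2 * ('X * P n.+2 - P n.+1)
   = 'X * (npoly n.+2 * P n.+2) - npoly n.+2 * P n.+1 by ring.
rewrite hA' hr.
have -> : ('X^2 - 1) * ('X * (P n.+1)^`() + npoly n.+2 * P n.+1)
  = 'X * (('X^2 - 1) * (P n.+1)^`()) + npoly n.+2 * ('X^2 - 1) * P n.+1 by ring.
rewrite hD /npoly; ring.
Qed.


Lemma PrecR n (x : R) :
  (P n.+2).[x] * n.+2%:R = x * (P n.+1).[x] * (2 * n + 3)%N%:R - (P n).[x] * n.+1%:R.
Proof.
have e := Prec n.
rewrite !nK /npoly -!polyC_natr in e.
have e2 := congr1 (fun p => p.[x]) e.
rewrite /= !(hornerD, hornerN, hornerM, hornerC, hornerX) in e2.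
rewrite mulrC e2; ring.
Qed.

Lemma Pval n : (P n).[1] = 1 /\ (P n).[-1] = (-1) ^+ n.
Proof.
suff: [/\ (P n).[1] = 1, (P n).[-1] = (-1) ^+ n, (P n.+1).[1] = 1 & (P n.+1).[-1] = (-1) ^+ n.+1].
  by case.
elim: n => [|n [h1 h2 h3 h4]].
  by rewrite P0 P1 !hornerE.
split => //.
  apply: (@mulIf _ n.+2%:R); first by rewrite pnatr_eq0.
  rewrite PrecR h1 h3; ring.
apply: (@mulIf _ n.+2%:R); first by rewrite pnatr_eq0.
rewrite PrecR h2 h4 !exprS; ring.
Qed.

Definition Top (u : {poly R}) := (('X^2 - 1) * u^`())^`().

Lemma Pode n : Top (P n) = (n * n.+1)%N%:R *: P n.
Proof.
case: n => [|n]; first by rewrite /Top P0 derivC mulr0 derivC scale0r.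
have [_ hB hD] := legid n.
rewrite /Top hD deriv_npoly derivB derivM derivX mul1r.
have -> : P n.+1 + 'X * (P n.+1)^`() - (P n)^`() = P n.+1 + npoly n.+1 * P n.+1.
  by rewrite -hB; ring.
rewrite /npoly -mul_polyC polyC_natr natrM; ring.
Qed.

Lemma Top_sym u v : pint (Top u * v) (-1) 1 = pint (u * Top v) (-1) 1.
Proof.
rewrite /Top pint_parts [in RHS]mulrC pint_parts.
have z1 : ('X^2 - 1 : {poly R}).[1] = 0 by rewrite !hornerE; ring.
have z2 : ('X^2 - 1 : {poly R}).[-1] = 0 by rewrite !hornerE; ring.
rewrite !hornerM z1 z2 !mul0r subrr !sub0r.
by have -> : ('X^2 - 1) * v^`() * u^`() = ('X^2 - 1) * u^`() * v^`() by ring.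
Qed.

Lemma coef_Top q i :
  (Top q)`_i = q`_i * (i * i.+1)%N%:R - q`_i.+2 * (i.+2 * i.+1)%N%:R.
Proof.
rewrite /Top coef_deriv mulrBl mul1r coefB coefXnM coef_deriv.
case: i => [|i] /=; rewrite !coef_deriv.
  rewrite !natrM; ring.
rewrite subSS subSS subn0 !natrM; ring.
Qed.

Lemma Porth n (q : {poly R}) : (size q <= n)%N -> pint (P n * q) (-1) 1 = 0.
Proof.
suff H : forall d, (d <= n)%N -> forall q : {poly R}, (size q <= d)%N -> pint (P n * q) (-1) 1 = 0.
  by move=> hq; exact: H n (leqnn n) q hq.
move=> {q}; elim=> [|d IH] hd q hq.
  by move: hq; rewrite leqn0 size_poly_eq0 => /eqP ->; rewrite mulr0 pint0.
set mu : R := (d * d.+1)%N%:R.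
set lam : R := (n * n.+1)%N%:R.
have hs : (size (Top q - mu *: q)%R <= d)%N.
  apply/leq_sizeP => j hj; rewrite coefB coefZ coef_Top.
  have z2 : q`_j.+2 = 0 by apply: nth_default; apply: leq_trans hq _; rewrite ltnS; apply: leqW.
  rewrite z2 mul0r subr0.
  move: hj; rewrite leq_eqVlt => /orP [/eqP <-|hj].
    by rewrite /mu; ring.
  by rewrite (nth_default _ (leq_trans hq hj)); ring.
have e1 := IH (ltnW hd) _ hs.
have t := Top_sym (P n) q.
rewrite Pode -scalerAl pintZ -/lam in t.
rewrite mulrBr pintB -scalerAr pintZ -t in e1.
have e2 : lam * pint (P n * q) (-1) 1 = mu * pint (P n * q) (-1) 1.
  by apply/eqP; rewrite -subr_eq0 e1.
apply: (@mulfI _ (lam - mu)); last by rewrite mulr0 mulrBl e2 subrr.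
rewrite /lam /mu subr_eq0 eqr_nat; apply/negP => /eqP e.
have : (d * d.+1 < n * n.+1)%N by apply: ltn_mul.
by rewrite e ltnn.
Qed.

Lemma size_deriv_le (p : {poly R}) : (size p^`() <= (size p).-1)%N.
Proof.
have [->|p0] := eqVneq p 0; first by rewrite deriv0 size_poly0.
by have := lt_size_deriv p0; case: (size p).
Qed.

Lemma sgn_sq n : (-1) ^+ n * (-1) ^+ n = 1 :> R.
Proof. by rewrite -exprD addnn -mul2n exprM sqrrN expr1n expr1n. Qed.

Lemma size_P n : (size (P n) <= n.+1)%N.
Proof.
suff: (size (P n) <= n.+1)%N /\ (size (P n.+1) <= n.+2)%N by case.
elim: n => [|n [h1 h2]]; first by rewrite P0 P1 size_polyX size_poly1.
split => //.
rewrite /legendre [legpair R n.+2]legpairS [legpair R n.+1]legpairS /=.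
apply: leq_trans (size_scale_leq _ _) _.
apply: leq_trans (size_polyD _ _) _; rewrite size_polyN geq_max; apply/andP; split.
  apply: leq_trans (size_scale_leq _ _) _.
  apply: leq_trans (size_polyMleq _ _) _; rewrite size_polyX.
  by move: h2; rewrite /legendre [legpair R n.+1]legpairS.
apply: leq_trans (size_scale_leq _ _) _.
by apply: leq_trans h1 _; apply: leqW; apply: leqW.
Qed.

Lemma Pnorm n : pint (P n * P n) (-1) 1 = 2 / (2 * n + 1)%N%:R.
Proof.
have [hA _ _] := legid n.
have [v1 v2] := Pval n.
have [w1 w2] := Pval n.+1.
set N := pint (P n * P n) (-1) 1.
set I := pint ('X * (P n)^`() * P n) (-1) 1.
have e1 : I + n.+1%:R * N = 2.
  have o : pint (P n.+1 * (P n)^`()) (-1) 1 = 0.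
    apply: Porth; apply: leq_trans (size_deriv_le _) _.
    by have := size_P n; case: (size (P n)) => //= m hm; apply: leqW.
  have := pint_parts (P n.+1) (P n) (-1) 1.
  rewrite o !hornerM v1 v2 w1 w2 hA mulrDl pintD.
  rewrite /npoly -polyC_natr mul_polyC -scalerAl pintZ -/N -/I => ->.
  rewrite exprS mulN1r mulNr sgn_sq; ring.
have e2 : N + 2%:R * I = 2.
  have := pint_deriv ('X * (P n * P n)) (-1) 1.
  have -> : ('X * (P n * P n))^`() = P n * P n + 2%:R *: ('X * (P n)^`() * P n).
    by rewrite derivM derivX derivM scaler_nat; ring.
  rewrite pintD pintZ !hornerM !hornerX v1 v2 -/N -/I => ->.
  rewrite sgn_sq; ring.
apply: (@mulIf _ (2 * n + 1)%N%:R); first by rewrite pnatr_eq0 addn1.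
rewrite divfK ?pnatr_eq0 ?addn1 //.
have -> : N * (2 * n).+1%:R = 2%:R * (I + n.+1%:R * N) - (N + 2%:R * I).
  by rewrite -addn1 natrD natrM; ring.
by rewrite e1 e2; ring.
Qed.

End Leg.

Section Shift.
Variable R : realFieldType.
Local Notation P n := (legendre R n).

Definition Pc n := (P n)`_n.

Lemma Pc_rec n : Pc n.+1 * n.+1%:R = Pc n * (2 * n + 1)%N%:R.
Proof.
case: n => [|n]; first by rewrite /Pc /legendre /= coefX mulr1 coefC /= mul1r.
have e := congr1 (fun p : {poly R} => p`_n.+2) (Prec R n).
rewrite /= coefB !coefMn coefXM /= in e.
have z : (P n)`_n.+2 = 0 by apply: nth_default; apply: leq_trans (size_P R n) _; apply: leqW.
rewrite z mul0rn subr0 in e.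
rewrite /Pc !mulr_natr e; congr (_ *+ _).
by rewrite mulnSr -addnA.
Qed.

Lemma Pc_gt0 n : 0 < Pc n.
Proof.
elim: n => [|n IH]; first by rewrite /Pc /legendre /= coefC ltr01.
have := Pc_rec n => e.
have -> : Pc n.+1 = Pc n * (2 * n + 1)%N%:R / n.+1%:R.
  by rewrite -e mulfK // pnatr_eq0.
by apply: divr_gt0; [apply: mulr_gt0 => //; rewrite ltr0n addn1|rewrite ltr0n].
Qed.

Lemma size_P_eq n : size (P n) = n.+1.
Proof.
apply/eqP; rewrite eqn_leq size_P /=.
rewrite ltnNge; apply/negP => h.
by have := Pc_gt0 n; rewrite /Pc nth_default // ltxx.
Qed.

Variables a b : R.
Hypothesis ab : a < b.

Definition sc := 2 / (b - a).
Definition md := (a + b) / 2.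
Definition phi : {poly R} := sc *: ('X - md%:P).
Definition S n := P n \Po phi.

Lemma ba0 : b - a != 0. Proof. by rewrite subr_eq0 gt_eqF. Qed.
Lemma sc0 : sc != 0. Proof. by rewrite /sc mulf_neq0 ?invr_eq0 ?ba0 ?pnatr_eq0. Qed.

Lemma S_def n : shifted_legendre a b n = S n.
Proof.
rewrite /shifted_legendre /S /phi; congr (_ \Po _).
rewrite scalerBr -[sc *: md%:P]mul_polyC -polyCM; congr (_ - _%:P).
rewrite /sc /md; field; rewrite ba0 //.
Qed.

Lemma size_phi : size phi = 2.
Proof. by rewrite /phi size_scale ?sc0 // size_XsubC. Qed.

Lemma pint_S (p : {poly R}) : pint (p \Po phi) a b = (b - a) / 2 * pint p (-1) 1.
Proof.
have -> : phi = sc *: 'X + (- (sc * md))%:P.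
  by rewrite /phi scalerBr polyCN (polyCM sc md) mul_polyC.
rewrite pint_comp ?sc0 //.
have -> : sc * a + - (sc * md) = -1 by rewrite /sc /md; field; rewrite ba0.
have -> : sc * b + - (sc * md) = 1 by rewrite /sc /md; field; rewrite ba0.
by congr (_ * _); rewrite /sc; field; rewrite ba0.
Qed.

Lemma S_orth n (q : {poly R}) : (size q <= n)%N -> pint (S n * q) a b = 0.
Proof.
move=> hq.
have [->|q0] := eqVneq q 0; first by rewrite mulr0 pint0.
set psi : {poly R} := sc^-1 *: 'X + md%:P.
have hpsi : psi \Po phi = 'X.
  rewrite /psi comp_polyD comp_polyZ comp_polyX comp_polyC /phi scalerA mulVf ?sc0 //.
  by rewrite scale1r subrK.
have -> : q = (q \Po psi) \Po phi by rewrite -comp_polyA hpsi comp_polyXr.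
rewrite /S -comp_polyM pint_S (Porth (n:=n)) ?mulr0 //.
apply: leq_trans (size_comp_poly_leq _ _) _.
have hs : ((size psi).-1 <= 1)%N.
  suff : (size psi <= 2)%N by case: (size psi) => [|[|[|]]].
  rewrite /psi.
  apply: leq_trans (size_polyD _ _) _; rewrite geq_max size_polyC; apply/andP; split; last by case: (_ != 0).
  by apply: leq_trans (size_scale_leq _ _) _; rewrite size_polyX.
apply: leq_trans hq; have q1 : (0 < size q)%N by rewrite size_poly_gt0.
rewrite -(prednK q1) ltnS.
by apply: leq_trans (leq_mul (leqnn _) hs) _; rewrite muln1.
Qed.

Lemma S_norm n : pint (S n * S n) a b = (b - a) / (2 * n + 1)%N%:R.
Proof.
rewrite /S -comp_polyM pint_S Pnorm; field.
have -> : 2 * n%:R + 1 = (2 * n + 1)%N%:R :> R by rewrite natrD natrM.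
by rewrite pnatr_eq0 addn1.
Qed.

Lemma size_S n : size (S n) = n.+1.
Proof. by rewrite /S size_comp_poly2 ?size_phi // size_P_eq. Qed.

Lemma S_top n : (S n)`_n = Pc n * sc ^+ n.
Proof.
have := lead_coef_comp (P n) (q := phi); rewrite size_phi => /(_ isT).
rewrite /lead_coef -/(S n) size_S size_P_eq /= -/(Pc n) => ->.
by rewrite -/(lead_coef phi) /phi lead_coefZ lead_coefXsubC mulr1.
Qed.

End Shift.

Section Pos.
Variable R : realFieldType.
Variables a b : R.
Hypothesis ab : a < b.

Lemma sigma_neq0 n : (S a b n)`_n != 0.
Proof.
rewrite (S_top ab) mulf_neq0 ?expf_neq0 ?(sc0 ab) //.
exact: lt0r_neq0 (Pc_gt0 R n).
Qed.

Lemma size_S_le n : (size (S a b n) <= n.+1)%N.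
Proof. by rewrite (size_S ab). Qed.

Lemma pos d (r : {poly R}) : (size r <= d)%N ->
  0 <= pint (r * r) a b /\ (pint (r * r) a b = 0 -> r = 0).
Proof.
elim: d r => [|d IH] r hr.
  move: hr; rewrite leqn0 size_poly_eq0 => /eqP ->.
  by rewrite mulr0 pint0; split.
set c := r`_d / (S a b d)`_d.
set r' := r - c *: S a b d.
have hs : (size r' <= d)%N.
  apply/leq_sizeP => j hj; rewrite /r' coefB coefZ.
  move: hj; rewrite leq_eqVlt => /orP [/eqP <-|hj].
    by rewrite /c divfK ?sigma_neq0 // subrr.
  rewrite !nth_default ?mulr0 ?subr0 //; first by rewrite (size_S ab).
  exact: leq_trans hr hj.
have hr' : r = c *: S a b d + r' by rewrite /r' addrC subrK.
have E : r * r = (c * c) *: (S a b d * S a b d) + (c + c) *: (S a b d * r') + r' * r'.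
  rewrite {1 2}hr' -!mul_polyC polyCM polyCD; ring.
have hv : pint (r * r) a b = c * c * ((b - a) / (2 * d + 1)%N%:R) + pint (r' * r') a b.
  rewrite E !pintD !pintZ (S_norm ab) (S_orth ab) // mulr0 addr0 //.
have [IH1 IH2] := IH r' hs.
have hpos : 0 < (b - a) / (2 * d + 1)%N%:R.
  by rewrite divr_gt0 // ?subr_gt0 // ltr0n addn1.
have hc : 0 <= c * c by rewrite -expr2 sqr_ge0.
have hm : 0 <= c * c * ((b - a) / (2 * d + 1)%N%:R) by apply: mulr_ge0 => //; exact: ltW.
rewrite hv; split; first exact: addr_ge0.
move=> /eqP; rewrite paddr_eq0 // => /andP [/eqP h1 /eqP h2].
have c0 : c = 0.
  move: h1 => /eqP; rewrite mulf_eq0 (gt_eqF hpos) orbF mulf_eq0 orbb => /eqP //.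
by rewrite hr' (IH2 h2) c0 scale0r addr0.
Qed.

End Pos.

Ltac nz_solve := repeat (apply/andP; split); apply: lt0r_neq0; lra.

Lemma alg_contra (R : realFieldType) (P0 P1 P2 s h c rho : R) n :
  P1 * n.+1%:R = P0 * (2 * n + 1)%N%:R ->
  P2 * n.+2%:R = P1 * (2 * n.+1 + 1)%N%:R ->
  0 < P1 -> s != 0 -> 0 < h -> c != 0 ->
  c * (P1 * s ^+ n.+1) *+ n.+1 * (c * (P1 * s ^+ n.+1) / n.+2%:R) * rho
    = - (c * c * (h / (2 * n.+1 + 1)%N%:R)) ->
  0 < h / (2 * n.+1 - 1)%N%:R - - (P2 * s ^+ n.+2 * (P0 * s ^+ n) * rho) -> False.
Proof.
move=> e1 e2 p1 s0 h0 c0 E C.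
have hn := ler0n R n.
rewrite (_ : (2 * n.+1 - 1 = 2 * n + 1)%N) in C; last by lia.
have nz : forall m : nat, m.+1%:R != 0 :> R by move=> m; rewrite pnatr_eq0.
have n1 : (2 * n + 1)%N%:R != 0 :> R by rewrite addn1 nz.
have n3 : (2 * n.+1 + 1)%N%:R != 0 :> R by rewrite addn1 nz.
have P10 : P1 != 0 by rewrite gt_eqF.
rewrite !exprS in E C.
set t := s ^+ n in E C.
have t0 : t != 0 by rewrite expf_neq0.
have eP2 : P2 = P1 * (2 * n.+1 + 1)%N%:R / n.+2%:R by rewrite -e2 mulfK ?nz.
have eP0 : P0 = P1 * n.+1%:R / (2 * n + 1)%N%:R by rewrite e1 mulfK.
have E' : rho * (P1 * (s * t)) ^+ 2 = - h * n.+2%:R / (n.+1%:R * (2 * n.+1 + 1)%N%:R).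
  apply: (@mulfI _ (c * c * n.+1%:R / n.+2%:R)).
    by rewrite !mulf_neq0 ?invr_eq0 ?nz.
  have -> : c * c * n.+1%:R / n.+2%:R * (rho * (P1 * (s * t)) ^+ 2)
     = c * (P1 * (s * t)) *+ n.+1 * (c * (P1 * (s * t)) / n.+2%:R) * rho.
    rewrite -mulr_natr; field; nz_solve.
  rewrite E; field; nz_solve.
have eT : P2 * (s * (s * t)) * (P0 * t) * rho
   = (rho * (P1 * (s * t)) ^+ 2) * ((2 * n.+1 + 1)%N%:R * n.+1%:R / (n.+2%:R * (2 * n + 1)%N%:R)).
  rewrite eP2 eP0; field; nz_solve.
rewrite eT E' in C.
have : h / (2 * n + 1)%N%:R
   - - (- h * n.+2%:R / (n.+1%:R * (2 * n.+1 + 1)%N%:R) *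
        ((2 * n.+1 + 1)%N%:R * n.+1%:R / (n.+2%:R * (2 * n + 1)%N%:R))) = 0.
  field; nz_solve.
by move=> e; rewrite e ltxx in C.
Qed.

Section Coef.
Variable R : realFieldType.

Lemma coefM_top (u v : {poly R}) m n :
  (size u <= m.+1)%N -> (size v <= n.+1)%N -> (u * v)`_(m + n) = u`_m * v`_n.
Proof.
move=> hu hv; rewrite coefM.
have hm : (m < (m + n).+1)%N by rewrite ltnS leq_addr.
rewrite (bigD1 (Ordinal hm)) //= big1 ?addr0 ?addKn // => j hj.
have hj' : (nat_of_ord j != m) by apply: contra hj => /eqP e; apply/eqP; apply: val_inj.
case: (ltngtP j m) => h.
- rewrite [v`_ _]nth_default ?mulr0 //; apply: leq_trans hv _; lia.
- by rewrite nth_default ?mul0r //; apply: leq_trans hu _.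
- by move: hj'; rewrite h eqxx.
Qed.

End Coef.

Section Cell.
Variable R : realFieldType.
Variable k : nat.
Variables X A : nat -> R.
Implicit Types p q : {poly R}.

Definition Qd (p : {poly R}) := \sum_(j < k.+2) A j * p.[X j].
Definition Mv (p : {poly R}) (j : nat) := p.[X 0%N] + \sum_(m < j.+1) A m * p^`().[X m].

Lemma QdD p q : Qd (p + q) = Qd p + Qd q.
Proof. by rewrite /Qd -big_split; apply: eq_bigr => j _; rewrite hornerD mulrDr. Qed.
Lemma QdZ c p : Qd (c *: p) = c * Qd p.
Proof. by rewrite /Qd mulr_sumr; apply: eq_bigr => j _; rewrite hornerZ; ring. Qed.
Lemma QdN p : Qd (- p) = - Qd p.
Proof. by rewrite -scaleN1r QdZ mulN1r. Qed.
Lemma QdB p q : Qd (p - q) = Qd p - Qd q.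
Proof. by rewrite QdD QdN. Qed.

Hypothesis k1 : (1 <= k)%N.
Hypothesis ab : X 0%N < X k.+1.
Hypothesis exact : forall p : {poly R}, (size p <= 2 * k)%N ->
  pint p (X 0%N) (X k.+1) - Qd p = 0.
Hypothesis cond2 :
  0 < (X k.+1 - X 0%N) / (2 * k - 1)%N%:R
      - Qd (shifted_legendre (X 0%N) (X k.+1) k.+1
            * shifted_legendre (X 0%N) (X k.+1) k.-1).

Local Notation a := (X 0%N).
Local Notation b := (X k.+1).

Definition Rf p := pint p a b - Qd p.

Lemma RfD p q : Rf (p + q) = Rf p + Rf q.
Proof. by rewrite /Rf pintD QdD; ring. Qed.
Lemma RfZ c p : Rf (c *: p) = c * Rf p.
Proof. by rewrite /Rf pintZ QdZ; ring. Qed.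

Lemma Rf_top p : (size p <= (2 * k).+1)%N -> Rf p = p`_(2 * k) * Rf 'X^(2 * k).
Proof.
move=> hp.
have -> : p = (p - p`_(2 * k) *: 'X^(2 * k)) + p`_(2 * k) *: 'X^(2 * k) by rewrite subrK.
rewrite RfD RfZ coefD coefZ coefB coefZ coefXn eqxx mulr1 subrr add0r.
rewrite [Rf (_ - _)]exact ?add0r //.
apply/leq_sizeP => j hj; rewrite coefB coefZ coefXn.
move: hj; rewrite leq_eqVlt => /orP [/eqP <-|hj]; first by rewrite eqxx mulr1 subrr.
by rewrite (gtn_eqF hj) mulr0 subr0 nth_default //; apply: leq_trans hp hj.
Qed.

Lemma Mv_inj (w : {poly R}) : (size w <= k.+1)%N ->
  (forall j, (j < k.+1)%N -> Mv w j = 0) -> w = 0.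
Proof.
move=> hw hM.
set w' := w^`().
have hsw' : (size w' <= k)%N by apply: leq_trans (size_deriv_le _) _; rewrite -subn1 leq_subLR add1n.
have h0 : w.[a] + A 0%N * w'.[a] = 0.
  by have := hM 0%N isT; rewrite /Mv big_ord1.
have hj : forall j, (0 < j)%N -> (j < k.+1)%N -> A j * w'.[X j] = 0.
  case=> [//|j] _ hj.
  have e1 := hM j (ltnW hj); have e2 := hM j.+1 hj.
  rewrite /Mv big_ord_recr /= addrA in e2; rewrite /Mv in e1.
  by rewrite e1 add0r in e2.
have hQ : forall g, Qd (w' * g) = A 0%N * w'.[a] * g.[a] + A k.+1 * w'.[b] * g.[b].
  move=> g; rewrite /Qd big_ord_recr big_ord_recl /= big1 ?addr0.
    by rewrite !hornerM; ring.
  move=> j _; rewrite hornerM mulrA (hj j.+1) ?mul0r //.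
  by rewrite ltnS.
set al := A 0%N * w'.[a].
set be := A k.+1 * w'.[b].
have wa : w.[a] = - al by apply/eqP; rewrite -addr_eq0 h0.
have ex' : forall p, (size p <= 2 * k)%N -> pint p a b = Qd p.
  by move=> p /exact /eqP; rewrite subr_eq0 => /eqP.
have hwg : forall g : {poly R}, (size g <= k.+1)%N -> (size (w' * g)%R <= 2 * k)%N.
  move=> g hg; apply: leq_trans (size_polyMleq _ _) _; lia.
have wb : w.[b] = be.
  have h1 : forall x, (1 : {poly R}).[x] = 1 by move=> x; rewrite -polyC1 hornerC.
  have := ex' (w' * 1) (hwg 1 ltac:(by rewrite size_poly1)).
  rewrite hQ mulr1 pint_deriv !h1 !mulr1 wa -/al -/be => e.
  have -> : w.[b] = (w.[b] - - al) - al by ring.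
  by rewrite e; ring.
have h3 : forall q, (size q <= k)%N -> pint (w * q) a b = 0.
  move=> q hq; set g := prim q.
  have hg : (size g <= k.+1)%N by apply: leq_trans (size_prim q) _.
  have e := pint_parts g w a b.
  rewrite /g prim_deriv -/g [g * w']mulrC (ex' (w' * g)) ?hwg // hQ !hornerM wa wb -/al -/be in e.
  rewrite mulrC e; ring.
set sg := (S a b k)`_k.
set c := w`_k / sg.
set r := w - c *: S a b k.
have hsr : (size r <= k)%N.
  apply/leq_sizeP => j hj0; rewrite /r coefB coefZ.
  move: hj0; rewrite leq_eqVlt => /orP [/eqP <-|hj'].
    by rewrite /c divfK ?(sigma_neq0 ab) // subrr.
  rewrite !nth_default ?mulr0 ?subr0 //; first by rewrite (size_S ab).
  exact: leq_trans hw hj'.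
have hr : pint (r * r) a b = 0.
  rewrite {1}/r mulrBl -scalerAl pintB pintZ h3 // (S_orth ab) // mulr0 subr0 //.
have wc : w = c *: S a b k.
  by move: ((proj2 (pos ab hsr)) hr) => /eqP; rewrite subr_eq0 => /eqP.
have [c0|c0] := eqVneq c 0; first by rewrite wc c0 scale0r.
exfalso.
set W := prim w.
have hsW : (size W <= k.+2)%N by apply: leq_trans (size_prim w) _.
have hsp : (size (w' * W)%R <= (2 * k).+1)%N.
  apply: leq_trans (size_polyMleq _ _) _; lia.
have Rp : Rf (w' * W) = - pint (w * w) a b.
  have e := pint_parts W w a b.
  rewrite /W prim_deriv -/W in e.
  have e2 : pint (W * w') a b = (W * w).[b] - (W * w).[a] - pint (w * w) a b by rewrite e; ring.
  by rewrite /Rf hQ [w' * W]mulrC e2 !hornerM wa wb -/al -/be; ring.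
have ww : pint (w * w) a b = c * c * ((b - a) / (2 * k + 1)%N%:R).
  by rewrite wc -scalerAl -scalerAr scalerA pintZ (S_norm ab).
have ws : w`_k = c * sg by rewrite wc coefZ.
have szw : size w = k.+1.
  by rewrite wc size_scale // (size_S ab).
have pc : (w' * W)`_(2 * k) = (w`_k *+ k) * (w`_k / k.+1%:R).
  have hk : (2 * k = k.-1 + k.+1)%N by lia.
  rewrite hk coefM_top ?prednK //.
  by rewrite /w' coef_deriv prednK // /W /prim coef_poly szw ltnSn.
rewrite (Rf_top hsp) pc in Rp.
have cd := cond2.
rewrite !(S_def ab) in cd.
have q2 : Qd (S a b k.+1 * S a b k.-1)
    = - ((S a b k.+1)`_k.+1 * (S a b k.-1)`_k.-1 * Rf 'X^(2 * k)).
  have hs2 : (size (S a b k.+1 * S a b k.-1)%R <= (2 * k).+1)%N.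
    apply: leq_trans (size_polyMleq _ _) _; rewrite !(size_S ab); lia.
  have := Rf_top hs2; rewrite {1}/Rf (S_orth ab) ?(size_S ab) ?prednK // sub0r => /(congr1 (fun x => - x)); rewrite opprK => ->.
  have hk : (2 * k = k.+1 + k.-1)%N by lia.
  by rewrite hk coefM_top ?(size_S ab) ?prednK.
rewrite q2 in cd.
rewrite ws ww /sg !(S_top ab) in Rp.
rewrite !(S_top ab) in cd.
move: Rp cd.
have sc0' := sc0 ab.
have hba : 0 < b - a by rewrite subr_gt0.
move: sc0' hba c0.
set rho := Rf _.
move: (sc a b) (b - a) rho => s h rho.
have [n en] : exists n, k = n.+1 by exists k.-1; rewrite prednK.
rewrite en /=.
have hpc1 := Pc_rec R n.
have hpc2 := Pc_rec R n.+1.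
have p1 := Pc_gt0 R n.+1.
move: hpc1 hpc2 p1.
move: (Pc R n) (Pc R n.+1) (Pc R n.+2) => P0 P1 P2.
move=> H1 H2 H3 H4 H5 H6 H7 H8; exact: (alg_contra H1 H2 H3 H4 H5 H6 H7 H8).
Qed.

End Cell.

Section Cell2.
Variable R : realFieldType.
Variable k : nat.
Variables X A : nat -> R.
Implicit Types p q : {poly R}.

Lemma MvD p q j : Mv X A (p + q) j = Mv X A p j + Mv X A q j.
Proof.
rewrite /Mv hornerD addrACA -big_split /=; congr (_ + _).
by apply: eq_bigr => m _; rewrite derivD hornerD mulrDr.
Qed.

Lemma Mv0 j : Mv X A 0 j = 0.
Proof. by rewrite /Mv horner0 add0r big1 // => m _; rewrite deriv0 horner0 mulr0. Qed.

Lemma MvZ c p j : Mv X A (c *: p) j = c * Mv X A p j.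
Proof.
rewrite /Mv hornerZ mulrDr mulr_sumr; congr (_ + _).
by apply: eq_bigr => m _; rewrite derivZ hornerZ; ring.
Qed.

Lemma Mv_sum n (F : 'I_n -> {poly R}) j :
  Mv X A (\sum_(l < n) F l) j = \sum_(l < n) Mv X A (F l) j.
Proof.
elim: n F => [|n IH] F; first by rewrite !big_ord0 Mv0.
by rewrite !big_ord_recr MvD IH.
Qed.

Definition Mat : 'M[R]_(k.+1) := \matrix_(l, j) Mv X A ('X^l) j.
Definition pv (v : 'rV[R]_(k.+1)) : {poly R} := \poly_(l < k.+1) v 0 (inord l).

Lemma Mv_pv v (j : 'I_k.+1) : Mv X A (pv v) j = (v *m Mat) 0 j.
Proof.
rewrite /pv poly_def Mv_sum mxE; apply: eq_bigr => l _.
by rewrite MvZ /Mat mxE inord_val.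
Qed.

Lemma size_pv v : (size (pv v) <= k.+1)%N.
Proof. exact: size_poly. Qed.

Lemma sbp (w : {poly R}) (f : nat -> R) n :
  \sum_(j < n.+1) Mv X A w j * (f j - f j.+1)
  = w.[X 0%N] * f 0%N + \sum_(j < n.+1) A j * f j * w^`().[X j] - Mv X A w n * f n.+1.
Proof.
elim: n => [|n IH].
  by rewrite !big_ord1 /Mv big_ord1; ring.
rewrite big_ord_recr IH /= [in RHS]big_ord_recr /=.
have -> : Mv X A w n.+1 = Mv X A w n + A n.+1 * w^`().[X n.+1].
  by rewrite /Mv big_ord_recr /= addrA.
ring.
Qed.

Hypothesis k1 : (1 <= k)%N.
Hypothesis ab : X 0%N < X k.+1.
Hypothesis exact : forall p : {poly R}, (size p <= 2 * k)%N ->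
  pint p (X 0%N) (X k.+1) - Qd k X A p = 0.
Hypothesis cond2 :
  0 < (X k.+1 - X 0%N) / (2 * k - 1)%N%:R
      - Qd k X A (shifted_legendre (X 0%N) (X k.+1) k.+1
            * shifted_legendre (X 0%N) (X k.+1) k.-1).

Lemma cell_identity (w : {poly R}) (f : nat -> R) : (size w <= k.+1)%N ->
  \sum_(j < k.+1) Mv X A w j * (f j - f j.+1)
  = \sum_(j < k.+2) A j * f j * w^`().[X j] + w.[X 0%N] * f 0%N - w.[X k.+1] * f k.+1.
Proof.
move=> hw.
have hs : (size w^`() <= 2 * k)%N.
  apply: leq_trans (size_deriv_le _) _; lia.
have e := exact hs; rewrite pint_deriv /Qd big_ord_recr /= in e.
rewrite sbp [in RHS]big_ord_recr /=.
have -> : Mv X A w k = w.[X 0%N] + \sum_(j < k.+1) A j * w^`().[X j] by [].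
move/eqP: e; rewrite subr_eq0 => /eqP e.
have -> : \sum_(j < k.+1) A j * w^`().[X j] = w.[X k.+1] - w.[X 0%N] - A k.+1 * w^`().[X k.+1].
  by rewrite e; ring.
ring.
Qed.

Lemma Mat_unit : Mat \in unitmx.
Proof.
rewrite -row_free_unit; apply: inj_row_free => v hv.
have h0 : pv v = 0.
  apply: (Mv_inj k1 ab exact cond2 (size_pv v)) => j hj.
  by rewrite (Mv_pv v (Ordinal hj)) hv mxE.
apply/rowP => l; rewrite mxE.
by have := congr1 (fun p : {poly R} => p`_l) h0; rewrite coef_poly ltn_ord coef0 inord_val.
Qed.

Lemma Mv_surj (t : nat -> R) : exists w : {poly R}, (size w <= k.+1)%N /\
  forall j, (j < k.+1)%N -> Mv X A w j = t j.
Proof.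
exists (pv ((\row_(j < k.+1) t j) *m invmx Mat)); split; first exact: size_pv.
move=> j hj; rewrite (Mv_pv _ (Ordinal hj)) mulmxKV ?Mat_unit //.
by rewrite mxE.
Qed.

End Cell2.

Section Sol.
Variable R : realFieldType.
Variable k : nat.
Variables X A : nat -> R.

Definition solv (t : nat -> R) : {poly R} :=
  pv ((\row_(j < k.+1) t j) *m invmx (Mat k X A)).

Lemma size_solv t : (size (solv t) <= k.+1)%N.
Proof. exact: size_pv. Qed.

Hypothesis k1 : (1 <= k)%N.
Hypothesis ab : X 0%N < X k.+1.
Hypothesis exact : forall p : {poly R}, (size p <= 2 * k)%N ->
  pint p (X 0%N) (X k.+1) - Qd k X A p = 0.
Hypothesis cond2 :
  0 < (X k.+1 - X 0%N) / (2 * k - 1)%N%:R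
      - Qd k X A (shifted_legendre (X 0%N) (X k.+1) k.+1
            * shifted_legendre (X 0%N) (X k.+1) k.-1).

Lemma Mv_solv t j : (j < k.+1)%N -> Mv X A (solv t) j = t j.
Proof.
move=> hj; rewrite /solv (Mv_pv _ _ _ (Ordinal hj)) mulmxKV ?(Mat_unit k1 ab exact cond2) //.
by rewrite mxE.
Qed.

End Sol.

Unset Implicit Arguments.
Unset Strict Implicit.

Theorem theorem3p11 (R : realFieldType) (N k : nat)
  (x A : 'I_N -> nat -> R) (ut : 'I_N -> {poly R})
  (fhat : 'I_N -> nat -> R) (fI : nat -> R) :
  (* geometry: strictly increasing subdivision points in each cell, cells contiguous *)
  (forall (i : 'I_N) (j : nat), (j <= k)%N -> x i j < x i j.+1) ->
  (forall i i' : 'I_N, nat_of_ord i' = (nat_of_ord i).+1 -> x i k.+1 = x i' 0%N) ->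
  (* Assumption (S) *)
  (1 <= k)%N ->
  (forall (i : 'I_N) (p : {poly R}), (size p <= 2 * k)%N ->
     pint p (x i 0%N) (x i k.+1) - quad k x A i p = 0) ->
  (forall i : 'I_N,
     0 < (x i k.+1 - x i 0%N) / (2 * k - 1)%N%:R
         - quad k x A i (shifted_legendre (x i 0%N) (x i k.+1) k.+1
                         * shifted_legendre (x i 0%N) (x i k.+1) k.-1)) ->
  (* (u_h)_t in V^k *)
  (forall i : 'I_N, (size (ut i) <= k.+1)%N) ->
  (* fhat_{i,0} = fhat_{i-1/2}, fhat_{i,k+1} = fhat_{i+1/2} (interface fluxes fI) *)
  (forall i : 'I_N, fhat i 0%N = fI i /\ fhat i k.+1 = fI i.+1) ->
  (forall ws : 'I_N -> nat -> R,
     l2_star k x ut ws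
     = \sum_(i < N) \sum_(j < k.+1) ws i j * (fhat i j - fhat i j.+1))
  <->
  (forall w : 'I_N -> {poly R}, (forall i : 'I_N, (size (w i) <= k.+1)%N) ->
     ip_star k x A ut w
     = \sum_(i < N) (quad_flux k x A fhat w i
                     + (w i).[x i 0%N] * fI i - (w i).[x i k.+1] * fI i.+1)).
Proof.
move=> hx _ k1 hex hc2 hut hf.
have ab : forall i, x i 0%N < x i k.+1.
  move=> i; suff : forall j, (j <= k)%N -> x i 0%N < x i j.+1 by apply.
  elim=> [|j IH] hj; first exact: hx.
  by apply: lt_trans (IH (ltnW hj)) (hx i j.+1 hj).
have ci : forall (i : 'I_N) (w : {poly R}), (size w <= k.+1)%N ->
    \sum_(j < k.+1) Mv (x i) (A i) w j * (fhat i j - fhat i j.+1)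
    = \sum_(j < k.+2) A i j * fhat i j * w^`().[x i j]
      + w.[x i 0%N] * fI i - w.[x i k.+1] * fI i.+1.
  move=> i w hw; have [f0 f1] := hf i.
  by rewrite (cell_identity k1 (ab i) (hex i) (hc2 i)) // f0 f1.
split.
  move=> HL w hw; rewrite /ip_star HL; apply: eq_bigr => i _.
  by rewrite /quad_flux -(ci i (w i) (hw i)).
move=> HR ws.
set d := fun (i : 'I_N) (j : nat) =>
  pint (ut i) (x i j) (x i j.+1) - (fhat i j - fhat i j.+1).
set W := fun i : 'I_N => solv k (x i) (A i) (d i).
have hW : forall i, (size (W i) <= k.+1)%N by move=> i; exact: size_pv.
have HW := HR W hW.
have hMW : forall i j, (j < k.+1)%N -> Mstar x A W i j = d i j.
  move=> i j hj; exact: (Mv_solv k1 (ab i) (hex i) (hc2 i)).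
have hsum : \sum_(i < N) \sum_(j < k.+1) d i j * d i j = 0.
  move: HW; rewrite /ip_star /l2_star.
  have -> : \sum_(i < N) (quad_flux k x A fhat W i + (W i).[x i 0%N] * fI i
              - (W i).[x i k.+1] * fI i.+1)
      = \sum_(i < N) \sum_(j < k.+1) Mstar x A W i j * (fhat i j - fhat i j.+1).
    by apply: eq_bigr => i _; rewrite /quad_flux -(ci i (W i) (hW i)).
  move/eqP; rewrite -subr_eq0 -sumrB => /eqP e; apply: etrans e.
  apply: eq_bigr => i _; rewrite -sumrB; apply: eq_bigr => j _.
  by rewrite (hMW i j (ltn_ord j)) /d; ring.
have d0 : forall (i : 'I_N) (j : 'I_k.+1), d i j = 0.
  move=> i j.
  have nn : forall l : 'I_N, predT l -> 0 <= \sum_(j < k.+1) d l j * d l j.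
    by move=> l _; apply: sumr_ge0 => m _; rewrite -expr2 sqr_ge0.
  have h1 := psumr_eq0P nn hsum (i:=i) isT.
  have nn2 : forall m : 'I_k.+1, predT m -> 0 <= d i m * d i m.
    by move=> m _; rewrite -expr2 sqr_ge0.
  have h2 := psumr_eq0P nn2 h1 (i:=j) isT.
  by move/eqP: h2; rewrite mulf_eq0 orbb => /eqP.
rewrite /l2_star; apply: eq_bigr => i _; apply: eq_bigr => j _; congr (_ * _).
by have := d0 i j; rewrite /d => /eqP; rewrite subr_eq0 => /eqP.
Qed.
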